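(* Let $X,X_1,X_2,\dots$ be i.i.d. positive random variables with $\mathbb{E}X=1$, let $p\ge2$ be an integer and $2<\alpha\le4$, and suppose $\mathbb{P}\{X\ge x\}=O(x^{-p-\alpha})$ as $x\to\infty$. Let $2\le r\le p$ and let $\gamma=(\gamma_1,\dots,\gamma_r)$ be positive integers with $\gamma_1+\dots+\gamma_r=p$. With $S_r=X_1+\dots+X_r$, for any index $1\le k\le r$, $$\mathbb{E}\frac{X_1^{2\gamma_1}\cdots X_r^{2\gamma_r}}{\left(\frac1nS_r+1\right)^{p+1}}X_k^2=O(n^{p-r-\alpha+4})\quad(n\to\infty).$$ *)

(* Defs.v *)
From HB Require Import structures.
From mathcomp Require Import all_boot all_order all_algebra.
From mathcomp Require Import all_classical all_reals all_analysis.
Set Implicit Arguments. Unset Strict Implicit. Unset Printing Implicit Defensive.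
Import Order.TTheory GRing.Theory Num.Theory.
Local Open Scope classical_set_scope.
Local Open Scope ring_scope.

Definition mutually_independent d (T : measurableType d) (R : realType)
    (P : probability T R) (X : nat -> T -> R) : Prop :=
  forall (J : seq nat) (B : nat -> set R),
    uniq J -> (forall j, j \in J -> measurable (B j)) ->
    P (\big[setI/setT]_(j <- J) (X j @^-1` B j)) =
    (\prod_(j <- J) P (X j @^-1` B j))%E.

(* Main.v *)
Require Import Defs.
From HB Require Import structures.
From mathcomp Require Import all_boot all_order all_algebra.
From mathcomp Require Import all_classical all_reals all_analysis.
From mathcomp Require Import measurable_realfun.
From mathcomp Require Import ring lra zify.
Import Order.TTheory GRing.Theory Num.Theory.
Local Open Scope classical_set_scope.
Local Open Scope ring_scope.

Module PA.
Set Implicit Arguments. Unset Strict Implicit. Unset Printing Implicit Defensive.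
Import numFieldNormedType.Exports.
Local Open Scope classical_set_scope.
Local Open Scope ring_scope.
Local Open Scope ereal_scope.

Lemma nneseriesMr (R : realType) (f : nat -> \bar R) (y : \bar R) :
  (forall i, 0 <= f i) -> 0 <= y ->
  (\sum_(l <oo) f l) * y = \sum_(l <oo) (f l * y).
Proof.
move=> f0 y0.
have [yfin|] := boolP (y \is a fin_num).
  have -> : y = (fine y)%:E by rewrite fineK.
  rewrite muleC -nneseriesZl //; apply: congr_lim; apply: funext => n.
  by apply: eq_bigr => i _; rewrite muleC.
rewrite ge0_fin_numE // -leNgt leye_eq => /eqP ->.
have [[l0 fl0]|] := pselect (exists l, 0 < f l).
  have gt0 : 0 < \sum_(l <oo) f l.
    apply: (lt_le_trans fl0).
    apply: le_trans (nneseries_lim_ge l0.+1 (fun n _ _ => f0 n)).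
    rewrite big_nat_recr //= leeDr //; exact: sume_ge0.
  rewrite gt0_muley //.
  apply/eqP; rewrite eq_le leey andbT.
  apply: le_trans (nneseries_lim_ge l0.+1 (fun n _ _ => mule_ge0 (f0 n) (leey _))).
  rewrite big_nat_recr //= gt0_muley // addey //.
  by rewrite gt_eqF // (lt_le_trans ltNy0) //; apply: sume_ge0 => i _; exact: mule_ge0.
move=> /forallNP H.
have fz l : f l = 0 by apply/eqP; rewrite eq_le f0 andbT leNgt; apply/negP; exact: H l.
rewrite eseries0 ?mul0e; last by move=> i _ _; rewrite fz.
by rewrite eseries0 // => i _ _; rewrite fz mul0e.
Qed.

End PA.
Import PA.

Module PB.
Set Implicit Arguments. Unset Strict Implicit. Unset Printing Implicit Defensive.
Import numFieldNormedType.Exports.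
Local Open Scope classical_set_scope.
Local Open Scope ring_scope.
Local Open Scope ereal_scope.

Section Indep.
Context (R : realType) (d : measure_display) (T : measurableType d) (P : probability T R).
Variable Y : nat -> {RV P >-> R}.
Hypothesis indep : mutually_independent P (fun i => Y i : T -> R).
Variables (e : nat -> nat -> R) (B : nat -> nat -> set R).
Hypothesis e0 : forall j l, (0 <= e j l)%R.
Hypothesis mB : forall j l, measurable (B j l).

Definition Hf j (x : R) : \bar R := \sum_(l <oo) (e j l * \1_(B j l) x)%:E.
Definition Ef j := \sum_(l <oo) (e j l)%:E * P (Y j @^-1` B j l).
Definition cyl (K : seq nat) (Bk : nat -> set R) :=
  \big[setI/setT]_(j <- K) (Y j @^-1` Bk j).

Lemma mpre j (A : set R) : measurable A -> measurable (Y j @^-1` A).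
Proof. by move=> mA; rewrite -[_ @^-1` _]setTI; exact: measurable_funP. Qed.

Lemma mcyl K Bk : (forall j, measurable (Bk j)) -> measurable (cyl K Bk).
Proof.
move=> mBk; rewrite /cyl; elim: K => [|a K IH]; first by rewrite big_nil.
by rewrite big_cons; apply: measurableI => //; exact: mpre.
Qed.

Lemma Pcyl K Bk : uniq K -> (forall j, measurable (Bk j)) ->
  P (cyl K Bk) = \prod_(j <- K) P (Y j @^-1` Bk j).
Proof. by move=> uK mBk; apply: indep => // j _. Qed.

Lemma Hf_ge0 j x : 0 <= Hf j x.
Proof. by apply: nneseries_ge0 => l _ _; rewrite lee_fin mulr_ge0 // indic_ge0. Qed.

Lemma mterm j l : measurable_fun setT (fun t : T => (e j l * \1_(B j l) (Y j t))%:E).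
Proof.
apply/measurable_EFinP; apply: measurable_funM; first exact: measurable_cst.
by apply: measurableT_comp; [exact: measurable_indic | exact: measurable_funP].
Qed.

Lemma mHf j : measurable_fun setT (fun t : T => Hf j (Y j t)).
Proof.
rewrite /Hf.
have := @ge0_emeasurable_sum _ T R setT (fun l t => (e j l * \1_(B j l) (Y j t))%:E) xpredT.
apply.
  by move=> k x _ _; rewrite lee_fin mulr_ge0 // indic_ge0.
by move=> k _; exact: mterm.
Qed.

Lemma mG J : measurable_fun setT (fun t : T => \prod_(j <- J) Hf j (Y j t)).
Proof.
elim: J => [|a J IH].
  by under eq_fun do rewrite big_nil; exact: measurable_cst.
under eq_fun do rewrite big_cons.
by apply: emeasurable_funM => //; exact: mHf.
Qed.

Lemma G_ge0 J t : 0 <= \prod_(j <- J) Hf j (Y j t).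
Proof. by apply: prode_ge0 => j _; exact: Hf_ge0. Qed.

Lemma Ef_ge0 j : 0 <= Ef j.
Proof. by apply: nneseries_ge0 => l _ _; apply: mule_ge0 => //; rewrite lee_fin. Qed.

Lemma indep_int (J : seq nat) : uniq J -> forall K Bk, uniq K ->
  (forall j, measurable (Bk j)) -> (forall j, j \in J -> j \notin K) ->
  \int[P]_(t in cyl K Bk) (\prod_(j <- J) Hf j (Y j t)) =
  P (cyl K Bk) * \prod_(j <- J) Ef j.
Proof.
elim: J => [|a J IH] uJ K Bk uK mBk JK.
  transitivity (\int[P]_(t in cyl K Bk) (cst 1 t)).
    by apply: eq_integral => t _; rewrite big_nil.
  by rewrite big_nil integral_cst ?mul1e ?mule1 //; exact: mcyl.
move: uJ; rewrite cons_uniq => /andP[aJ uJ].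
have aK : a \notin K by apply: JK; rewrite mem_head.
have JK' : forall j, j \in J -> j \notin a :: K.
  move=> j jJ; rewrite in_cons negb_or JK ?inE ?jJ ?orbT // andbT.
  by apply/eqP => ja; move: aJ; rewrite -ja jJ.
rewrite (eq_integral (fun t => \sum_(l <oo) ((e a l * \1_(B a l) (Y a t))%:E *
    \prod_(j <- J) Hf j (Y j t)))); last first.
  move=> t _; have H1 := G_ge0 J t.
  have H2 l : 0 <= (e a l * \1_(B a l) (Y a t))%:E.
    by rewrite lee_fin mulr_ge0 // indic_ge0.
  by rewrite big_cons /Hf nneseriesMr.
rewrite integral_nneseries //; first last.
- by move=> n t _; apply: mule_ge0; [rewrite lee_fin mulr_ge0 // indic_ge0 | exact: G_ge0].
- by move=> n; apply: emeasurable_funM; [exact: measurable_funTS (mterm _ _) | exact: measurable_funTS (mG _)].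
- exact: mcyl.
pose Bk' l := fun j => if j == a then B a l else Bk j.
have mBk' l j : measurable (Bk' l j) by rewrite /Bk'; case: ifP.
have cylE l : cyl (a :: K) (Bk' l) = Y a @^-1` B a l `&` cyl K Bk.
  rewrite /cyl big_cons /Bk' eqxx; congr (_ `&` _).
  rewrite big_seq_cond [RHS]big_seq_cond; apply: eq_bigr => j /andP[jK _].
  by case: eqP => // ja; move: aK; rewrite -ja jK.
have PcylE l : P (cyl (a :: K) (Bk' l)) = P (Y a @^-1` B a l) * P (cyl K Bk).
  rewrite Pcyl //; last by rewrite cons_uniq aK.
  rewrite big_cons {1}/Bk' eqxx Pcyl //; congr (_ * _).
  rewrite big_seq_cond [RHS]big_seq_cond; apply: eq_bigr => j /andP[jK _].
  by rewrite /Bk'; case: eqP => // ja; move: aK; rewrite -ja jK.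
transitivity (\sum_(l <oo) ((e a l)%:E * (P (cyl K Bk) * \prod_(j <- J) Ef j) *
    P (Y a @^-1` B a l))).
  apply: congr_lim; apply: funext => n; apply: eq_bigr => l _.
  have -> : \int[P]_(t in cyl K Bk) ((e a l * \1_(B a l) (Y a t))%:E *
      \prod_(j <- J) Hf j (Y j t)) =
    (e a l)%:E * \int[P]_(t in cyl (a :: K) (Bk' l)) \prod_(j <- J) Hf j (Y j t).
    have mc := mcyl (a :: K) (mBk' l).
    have mg : measurable_fun (cyl (a :: K) (Bk' l)) (fun t => \prod_(j <- J) Hf j (Y j t)).
      exact: measurable_funTS (mG J).
    have g0 : forall t, cyl (a :: K) (Bk' l) t -> 0 <= \prod_(j <- J) Hf j (Y j t).
      by move=> t _; exact: G_ge0.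
    rewrite -ge0_integralZl_EFin // cylE setIC integral_mkcondr.
    apply: eq_integral => t _; rewrite patchE indicE EFinM -muleA.
    have -> : (Y a t \in B a l) = (t \in Y a @^-1` B a l) by apply/idP/idP; rewrite !inE.
    by case: ifPn => _; rewrite ?mul1e ?mul0e ?mule0.
  rewrite IH //; last by rewrite cons_uniq aK.
  by rewrite PcylE -!muleA; congr (_ * _); rewrite muleC -muleA.
rewrite big_cons.
set Q := P (cyl K Bk) * \prod_(j <- J) Ef j.
have Q0 : 0 <= Q by apply: mule_ge0 => //; apply: prode_ge0 => j _; exact: Ef_ge0.
transitivity (\sum_(l <oo) ((e a l)%:E * P (Y a @^-1` B a l) * Q)).
  by apply: congr_lim; apply: funext => n; apply: eq_bigr => l _; rewrite muleAC.
rewrite -nneseriesMr //; last by move=> l; apply: mule_ge0 => //; rewrite lee_fin.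
by rewrite /Q -/(Ef a) muleCA.
Qed.

End Indep.

End PB.
Import PB.

Module PC.
Set Implicit Arguments. Unset Strict Implicit. Unset Printing Implicit Defensive.
Import numFieldNormedType.Exports.
Local Open Scope classical_set_scope.
Local Open Scope ring_scope.
Local Open Scope ereal_scope.

Definition ew {R : realType} (m l : nat) : R :=
  if l is l'.+1 then 2%:R ^+ (l'.+1 * m) else 1.
Definition Bw {R : realType} (l : nat) : set R :=
  if l is l'.+1 then [set x | (2%:R ^+ l' <= x)%R] else setT.

Lemma ew_ge0 (R : realType) m l : (0 <= @ew R m l)%R.
Proof. by case: l => [|l] //=; rewrite exprn_ge0. Qed.

Lemma ge_itv (R : realType) (a : R) : [set x | (a <= x)%R] = [set` `[a, +oo[%R].
Proof. by apply/seteqP; split => x /=; rewrite in_itv /= andbT. Qed.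

Lemma mBw (R : realType) l : measurable (@Bw R l).
Proof. by case: l => [|l] //=; rewrite ge_itv; exact: measurable_itv. Qed.

Lemma Hw_ge (R : realType) (m : nat) (x : R) : (0 < x)%R ->
  (x ^+ m)%:E <= \sum_(l <oo) (ew m l * \1_(Bw l) x)%:E.
Proof.
move=> x0.
suff [l Hl] : exists l, (x ^+ m <= ew m l * \1_(Bw l) x)%R.
  apply: le_trans (nneseries_lim_ge l.+1 _); last first.
    by move=> n _ _; rewrite lee_fin mulr_ge0 ?ew_ge0 ?indic_ge0.
  rewrite big_nat_recr //= -[X in X <= _]add0e; apply: leeD; last by rewrite lee_fin.
  by apply: sume_ge0 => n _; rewrite lee_fin mulr_ge0 ?ew_ge0 ?indic_ge0.
have [x1|x1] := ltP x 1%R.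
  by exists 0%N; rewrite /= indicE mem_set // mulr1 exprn_ile1 // ltW.
have ex : exists n, (x < 2%:R ^+ n)%R.
  exists (Num.bound x); apply: (lt_le_trans (archi_boundP (ltW x0))).
  by rewrite -natrX ler_nat ltnW // ltn_expl.
case: (ex_minnP ex) => n Hn Hmin.
case: n Hn Hmin => [|l] Hn Hmin; first by move: Hn; rewrite expr0 ltNge x1.
exists l.+1; rewrite /= indicE mem_set ?mulr1; last first.
  by rewrite /= leNgt; apply/negP => /Hmin; rewrite ltnn.
rewrite exprM; apply: lerXn2r; rewrite ?nnegrE ?exprn_ge0 ?ltW //.
Qed.

Lemma lemaxr (R : realType) (a b : R) : (b <= Num.max a b)%R.
Proof. by rewrite le_max lexx orbT. Qed.

Section Moment.
Context (R : realType) (d : measure_display) (T : measurableType d) (P : probability T R).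
Variable X : {RV P >-> R}.
Variables (s C M : R).
Hypothesis s0 : (0 <= s)%R.
Hypothesis tail : forall x : R, (M <= x)%R ->
  P [set t | (x <= X t)%R] <= (C * powR x (- s))%:E.

Lemma mge (x : R) : measurable [set t | (x <= X t)%R].
Proof.
have -> : [set t | (x <= X t)%R] = X @^-1` [set` `[x, +oo[%R].
  by apply/seteqP; split => t /=; rewrite in_itv /= andbT.
rewrite -[_ @^-1` _]setTI; apply: measurable_funP => //; exact: measurable_itv.
Qed.

Lemma tail1 : exists K : R, (0 <= K)%R /\ forall x : R, (1 <= x)%R ->
  P [set t | (x <= X t)%R] <= (K * powR x (- s))%:E.
Proof.
exists (Num.max C (powR (Num.max M 1%R) s)); split.
  by rewrite le_max powR_ge0 orbT.
move=> x x1.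
have [Mx|xM] := leP M x.
  apply: le_trans (tail Mx) _; rewrite lee_fin ler_wpM2r ?powR_ge0 //.
  by rewrite le_max lexx.
apply: le_trans (probability_le1 _ (mge x)) _.
have xpos : (0 < powR x s)%R by rewrite powR_gt0 // (lt_le_trans ltr01).
rewrite lee_fin powRN ler_pdivlMr // mul1r.
apply: le_trans (lemaxr _ _).
apply: ge0_ler_powR => //; rewrite ?nnegrE ?(le_trans ler01) ?le_max ?lexx ?orbT //.
by rewrite (ltW xM).
Qed.

Lemma Ew_fin (m : nat) : (m%:R < s)%R ->
  \sum_(l <oo) (ew m l)%:E * P (X @^-1` Bw l) \is a fin_num.
Proof.
move=> ms.
have [K [K0 HK]] := tail1.
pose q := powR 2 (- s).
have q0 : (0 < q)%R by rewrite powR_gt0.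
pose rho := (2%:R ^+ m * q)%R.
have rho0 : (0 < rho)%R by rewrite mulr_gt0 // exprn_gt0.
have rho1 : (rho < 1)%R.
  rewrite /rho /q powRN ltr_pdivrMr ?powR_gt0 // mul1r.
  rewrite -powR_mulrn // -(subrK m%:R s) powRD; last by apply/implyP => _; rewrite pnatr_eq0.
  rewrite -[X in (X < _)%R]mul1r ltr_pM2r ?powR_gt0 //.
  by rewrite /powR gt_eqF // expR_gt1 mulr_gt0 ?subr_gt0 // ln_gt0 // ltr1n.
pose A := Num.max 1%R (K * 2%:R ^+ m / rho)%R.
have A0 : (0 <= A)%R by rewrite le_max ler01.
have bound l : (ew m l)%:E * P (X @^-1` Bw l) <= (A * rho ^+ l)%:E.
  case: l => [|l] /=.
    rewrite preimage_setT probability_setT mule1 expr0 mulr1 lee_fin.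
    by rewrite le_max lexx.
  apply: le_trans (lee_wpmul2l _ (HK _ _)) _.
  - by rewrite lee_fin exprn_ge0.
  - by rewrite -natrX ler1n expn_gt0.
  rewrite -EFinM lee_fin.
  have -> : (powR (2%:R ^+ l) (- s) = q ^+ l)%R.
    by rewrite /q -powR_mulrn // powRAC powR_mulrn // powR_ge0.
  apply: (le_trans _ (ler_wpM2r (exprn_ge0 _ (ltW rho0)) (lemaxr 1%R _))).
  rewrite exprS mulrA divfK ?gt_eqF // /rho exprMn.
  have -> : (2%:R ^+ (l.+1 * m) = 2%:R ^+ m * (2%:R ^+ m) ^+ l :> R)%R.
    by rewrite mulSn exprD mulnC exprM.
  by rewrite le_eqVlt; apply/orP; left; apply/eqP; ring.
rewrite ge0_fin_numE; last first.
  by apply: nneseries_ge0 => l _ _; apply: mule_ge0; rewrite ?lee_fin ?ew_ge0.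
apply: (le_lt_trans (lee_nneseries _ (fun l _ => bound l))).
  by move=> l _ _; apply: mule_ge0; rewrite ?lee_fin ?ew_ge0.
pose g : R^nat := series (geometric A rho).
have -> : \sum_(l <oo) (A * rho ^+ l)%:E = (limn g)%:E.
  rewrite -EFin_lim; last first.
    by apply: is_cvg_geometric_series; rewrite ger0_norm // ltW.
  by apply: congr_lim; apply: funext => n /=; rewrite sumEFin.
exact: ltey.
Qed.

End Moment.

End PC.
Import PC.

Module PD.
Set Implicit Arguments. Unset Strict Implicit. Unset Printing Implicit Defensive.
Import numFieldNormedType.Exports.
Local Open Scope classical_set_scope.
Local Open Scope ring_scope.
Local Open Scope ereal_scope.

Lemma le_integral_nm d (T : measurableType d) (R : realType) (mu : {measure set T -> \bar R})
  (f g : T -> \bar R) : (forall x, 0 <= f x) -> (forall x, f x <= g x) ->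
  \int[mu]_x f x <= \int[mu]_x g x.
Proof.
move=> f0 fg.
rewrite (ge0_integralE mu (D:=setT) (f:=f)) // (ge0_integralE mu (D:=setT) (f:=g)); last first.
  by move=> x _; apply: le_trans (fg x).
apply: ereal_sup_le => _ [h hf <-]; exists h => //= x.
apply: le_trans (hf x) _; rewrite /patch; case: ifPn => // _; exact: fg.
Qed.

Lemma lee_prod_ge0 (R : realType) I (s : seq I) (f g : I -> \bar R) :
  (forall i, 0 <= f i) -> (forall i, f i <= g i) ->
  \prod_(i <- s) f i <= \prod_(i <- s) g i.
Proof.
move=> f0 fg; elim: s => [|a s IH]; rewrite ?big_nil // !big_cons.
by apply: lee_pmul => //; apply: prode_ge0.
Qed.

Lemma prod_split (R : realType) r (Y : 'I_r -> R) (u v : 'I_r -> nat) k0 w :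
  (forall i, u i = (v i + (if i == k0 then w else 0))%N) ->
  (\prod_(i < r) Y i ^+ u i = Y k0 ^+ w * \prod_(i < r) Y i ^+ v i)%R.
Proof.
move=> uv; under eq_bigr do rewrite uv exprD.
rewrite big_split /= mulrC; congr (_ * _)%R.
rewrite (bigD1 k0) //= eqxx big1 ?mulr1 // => i /negbTE ->; exact: expr0.
Qed.

End PD.
Import PD.

Module PE.
Set Implicit Arguments. Unset Strict Implicit. Unset Printing Implicit Defensive.
Import numFieldNormedType.Exports.

Lemma arith r p (gamma : 'I_r -> nat) (k : 'I_r) :
  (2 <= r)%N -> (forall i, 0 < gamma i)%N -> (\sum_(i < r) gamma i)%N = p ->
  exists (i0 : 'I_r) (c : nat) (mm : 'I_r -> nat),
    [/\ (c <= p - r)%N, (forall i, mm i <= p + 2)%N &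
     (forall i, (2 * gamma i + (if i == k then 2 else 0))%N =
                (mm i + (if i == i0 then c else 0))%N)].
Proof.
move=> r2 g0 gs.
pose a i := (2 * gamma i + (if i == k then 2 else 0))%N.
have aub i : (a i <= 2 * gamma i + 2)%N by rewrite /a; case: (i == k); lia.
have A1 i j : i != j -> (gamma i + gamma j <= p)%N.
  move=> ij; rewrite -gs (bigD1 i) //= (bigD1 j) //=; last by rewrite eq_sym.
  lia.
have [i0 _ Hi0] : {i0 | true & forall j, (a j <= a i0)%N}.
  case: (@arg_maxnP _ k xpredT a) => // i0 _ H; exists i0 => // j; exact: H.
have A2 : (gamma i0 + (r - 1) <= p)%N.
  rewrite -gs (bigD1 i0) //= leq_add2l.
  have : (\sum_(i < r | i != i0) 1 <= \sum_(i < r | i != i0) gamma i)%N.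
    by apply: leq_sum => i _; exact: g0.
  by rewrite sum1_card cardC1 card_ord subn1.
exists i0, (a i0 - (p + 2))%N,
  (fun i => if i == i0 then (a i - (a i0 - (p + 2)))%N else a i).
split.
- have := aub i0; lia.
- move=> i; case: eqP => [->|/eqP ii0]; first lia.
  have := Hi0 i; have := aub i; have := aub i0; have := A1 i i0 ii0; lia.
- move=> i; rewrite -/(a i); case: eqP => [->|_]; lia.
Qed.

End PE.
Import PE.

Theorem lemma10 (R : realType) (d : measure_display) (T : measurableType d)
  (P : probability T R) (X : {RV P >-> R}) (Xs : nat -> {RV P >-> R})
  (p : nat) (alpha : R) (r : nat) (gamma : 'I_r -> nat) (k : 'I_r) :
  (forall t, 0 < X t) ->
  (forall i t, 0 < Xs i t) ->
  (forall i, distribution P (Xs i) = distribution P X) ->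
  mutually_independent P (fun i => Xs i : T -> R) ->
  ('E_P[X] = 1)%E ->
  (2 <= p)%N -> 2 < alpha <= 4 ->
  (exists C M : R, forall x : R, M <= x ->
     (P [set t | (x <= X t)%R] <= (C * powR x (- (p%:R + alpha)))%:E)%E) ->
  (2 <= r)%N -> (r <= p)%N ->
  (forall i, (0 < gamma i)%N) -> (\sum_(i < r) gamma i)%N = p ->
  exists (C : R) (N : nat), forall n : nat, (N <= n)%N ->
    ('E_P[fun t =>
        ((\prod_(i < r) Xs i t ^+ (2 * gamma i)) * Xs k t ^+ 2
        / ((\sum_(i < r) Xs i t) / n%:R + 1) ^+ p.+1)%R]
     <= (C * powR n%:R (p%:R - r%:R - alpha + 4))%:E)%E.
Proof.
move=> X0 Xs0 hdist hind hE hp /andP[ha2 ha4] [C [M htail]] hr2 hrp hg0 hgs.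
have [i0 [c [mm [hc hmm hdec]]]] := arith k hr2 hg0 hgs.
pose s := (p%:R + alpha)%R.
have s0 : (0 <= s)%R by rewrite /s addr_ge0 // ltW // (lt_trans _ ha2).
pose mj (j : nat) := mm (insubd i0 j).
have mjE (i : 'I_r) : mj i = mm i by rewrite /mj valKd.
pose e (j l : nat) := @ew R (mj j) l.
pose Bs (j l : nat) := @Bw R l.
have e0 j l : (0 <= e j l)%R by exact: ew_ge0.
have mBs j l : measurable (Bs j l) by exact: mBw.
have Efin j : Ef Xs e Bs j \is a fin_num.
  have -> : Ef Xs e Bs j = (\sum_(l <oo) (ew (mj j) l)%:E * P (X @^-1` Bw l))%E.
    apply: congr_lim; apply: funext => n; apply: eq_bigr => l _.
    rewrite /e /Bs; congr (_ * _)%E.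
    by have := hdist j => /(congr1 (fun mu => mu (Bw l))).
  apply: (Ew_fin s0 htail).
  have : (mj j <= p + 2)%N by exact: hmm.
  rewrite -(ler_nat R) natrD => H; apply: (le_lt_trans H).
  by rewrite /s ltrD2l.
pose G := (\prod_(j <- index_iota 0 r) Ef Xs e Bs j)%E.
have G0 : (0 <= G)%E by apply: prode_ge0 => j _; exact: Ef_ge0.
have Gfin : G \is a fin_num.
  rewrite /G; elim: (index_iota 0 r) => [|a l IH]; first by rewrite big_nil.
  by rewrite big_cons fin_numM.
pose Kc := fine G.
have K0 : 0 <= Kc by rewrite /Kc fine_ge0.
have GK : G = Kc%:E by rewrite /Kc fineK.
exists Kc, 1%N => n n1.
have nR : 1 <= n%:R :> R by rewrite ler1n.
have npos : 0 < n%:R :> R by rewrite ltr0n.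
rewrite unlock.
set Hs := fun t => (\prod_(j <- index_iota 0 r) Hf e Bs j (Xs j t))%E.
apply: (@le_trans _ _ (\int[P]_x ((n%:R ^+ c)%:E * Hs x))%E).
  apply: le_integral_nm.
    move=> t; rewrite lee_fin; apply: divr_ge0.
      apply: mulr_ge0; first by apply: prodr_ge0 => i _; apply: exprn_ge0; exact: ltW.
      by apply: exprn_ge0; exact: ltW.
    apply: exprn_ge0; apply: addr_ge0 => //; apply: divr_ge0 => //.
    by apply: sumr_ge0 => i _; exact: ltW.
  move=> t.
  set Pi := \prod_(i < r) Xs i t ^+ mm i.
  have Pi0 : 0 <= Pi by apply: prodr_ge0 => i _; apply: exprn_ge0; exact: ltW.
  apply: (@le_trans _ _ ((n%:R ^+ c * Pi)%:E)).
    rewrite lee_fin.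
    set S := \sum_(i < r) Xs i t.
    set D := S / n%:R + 1.
    have S0 : 0 <= S by apply: sumr_ge0 => i _; exact: ltW.
    have D1 : 1 <= D by rewrite /D lerDr divr_ge0.
    have Dpos : 0 < D ^+ p.+1 by rewrite exprn_gt0 // (lt_le_trans ltr01 D1).
    have num : (\prod_(i < r) Xs i t ^+ (2 * gamma i)) * Xs k t ^+ 2 =
               Xs i0 t ^+ c * Pi.
      have H1 := @prod_split R r (fun i : 'I_r => Xs i t)
        (fun i => (2 * gamma i + (if i == k then 2 else 0))%N)
        (fun i => (2 * gamma i)%N) k 2 (fun i => erefl).
      have H2 := @prod_split R r (fun i : 'I_r => Xs i t)
        (fun i => (2 * gamma i + (if i == k then 2 else 0))%N) mm i0 c hdec.
      by rewrite mulrC -H1 H2.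
    rewrite num ler_pdivrMr //.
    have key : Xs i0 t ^+ c <= n%:R ^+ c * D ^+ p.+1.
      have ND : Xs i0 t <= n%:R * D.
        have -> : n%:R * D = S + n%:R.
          by rewrite /D mulrDr mulr1 mulrC divfK // gt_eqF.
        apply: (@le_trans _ _ S); last by rewrite lerDl ltW.
        rewrite /S (bigD1 i0) //= lerDl; apply: sumr_ge0 => i _; exact: ltW.
      have nD0 : 0 <= n%:R * D by apply: mulr_ge0; [exact: ltW | exact: le_trans ler01 D1].
      have Xi0 : 0 <= Xs i0 t by exact: ltW.
      apply: (le_trans (lerXn2r c _ _ ND)); rewrite ?nnegrE //.
      rewrite exprMn; apply: ler_wpM2l; first exact: exprn_ge0 (ltW npos).
      apply: ler_weXn2l => //; apply: (leq_trans hc); rewrite (leq_trans (leq_subr _ _)) //.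
    apply: le_trans (ler_wpM2r Pi0 key) _.
    by rewrite mulrAC.
  rewrite EFinM; apply: lee_wpmul2l; first by rewrite lee_fin exprn_ge0 // ltW.
  rewrite /Hs big_mkord -prodEFin; apply: lee_prod_ge0.
    by move=> i; rewrite lee_fin exprn_ge0 // ltW.
  move=> i; rewrite /Hf /e mjE; exact: Hw_ge.
rewrite ge0_integralZl_EFin //; first last.
- exact: mG.
- by move=> t _; exact: G_ge0.
have := @indep_int R d T P Xs hind e Bs e0 mBs (index_iota 0 r) (iota_uniq _ _)
  [::] (fun _ => setT) erefl (fun _ => measurableT) (fun _ _ => erefl).
rewrite /cyl big_nil probability_setT mul1e -/G => ->.
rewrite GK -EFinM lee_fin mulrC ler_wpM2l //.
rewrite -powR_mulrn ?ler0n //; apply: ler_powR => //.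
have : (c%:R <= p%:R - r%:R :> R) by rewrite -natrB // ler_nat.
lra.
Qed.
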